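(* Let $\mathcal U=\{U_1|\dots|U_b\}$ be a partition of a $v$-set $\mathcal V$ into $b$ parts of size $a$, $v=ab$, $a>1$, $b\ge4$, let $k=ak_0$ with $1\le k_0\le b-1$, let $\Gamma_0\subseteq\binom{\mathcal U}{k_0}$, and let $\Gamma=\Gamma(a,\Gamma_0)$ be the set of all $k$-subsets of $\mathcal V$ of the form $\bigcup_{U\in\gamma_0}U$ with $\gamma_0\in\Gamma_0$. Let $A={\rm Aut}(\Gamma_0)\cap{\rm Sym}(\mathcal U)$. Then ${\rm Aut}(\Gamma)$ contains $S_a\wr A$, and $\delta(\Gamma)=a\,\delta(\Gamma_0)$. Moreover: (a) if $\Gamma_0$ is $A$-strongly incidence-transitive, then $\Gamma$ is $(S_a\wr A)$-strongly incidence-transitive, and either $\Gamma_0=\binom{\mathcal U}{k_0}$ or $\delta(\Gamma_0)\ge2$; (b) conversely, if $S_a\wr A$ is neighbour-transitive on $\Gamma$ (i.e. transitive on $\Gamma$ and on its neighbour set), then either $\Gamma_0$ is $A$-strongly incidence-transitive, or $a=2$ and $\delta(\Gamma_0)=1$.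
   Context: $\Gamma_0$ is regarded as a set of vertices of the Johnson graph $J(b,k_0)$ on the $b$-set $\mathcal U$, and $\Gamma$ as a set of vertices of $J(v,k)$ on $\mathcal V$; $J(n,j)$ has as vertices the $j$-subsets of an $n$-set, adjacent iff they meet in $j-1$ points. For such a set $\Delta$ of vertices: $\delta(\Delta)$ is the least graph distance between distinct elements; the neighbour set is the set of vertices not in $\Delta$ adjacent to some element of $\Delta$; ${\rm Aut}(\Delta)$ is the setwise stabiliser of $\Delta$ in the automorphism group of the Johnson graph. $S_a\wr A$ denotes the subgroup of ${\rm Sym}(\mathcal V)$ preserving $\mathcal U$, inducing a permutation in $A$ on the parts and arbitrary permutations within parts. $\Delta$ is $H$-strongly incidence-transitive (for $H$ a group of permutations of the underlying set leaving $\Delta$ invariant) if $H$ is transitive on $\Delta$ and, for $\delta\in\Delta$, $H_\delta$ is transitive on $\delta\times(\text{underlying set}\setminus\delta)$. *)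

(* Defs.v *)
From mathcomp Require Import all_boot all_order all_fingroup.
Set Implicit Arguments. Unset Strict Implicit. Unset Printing Implicit Defensive.

Section Johnson.
Variable T : finType.

Definition pact (h : {perm T}) (x : {set T}) : {set T} := [set h z | z in x].

Definition jadj (Om : {set T}) (j : nat) : rel {set T} :=
  fun x y => [&& x \subset Om, y \subset Om, #|x| == j, #|y| == j
              & #|x :&: y| == j.-1].

Definition jwalk (Om : {set T}) (j : nat) (x y : {set T}) (m : nat) : Prop :=
  exists s : seq {set T},
    [/\ size s = m, path (jadj Om j) x s & last x s = y].

Definition jdist (Om : {set T}) (j : nat) (x y : {set T}) (d : nat) : Prop :=
  jwalk Om j x y d /\ forall m, jwalk Om j x y m -> d <= m.

Definition min_dist (Om : {set T}) (j : nat) (Delta : {set {set T}}) (d : nat)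
  : Prop :=
  (exists x y, [/\ x \in Delta, y \in Delta, x != y & jdist Om j x y d]) /\
  (forall x y e, x \in Delta -> y \in Delta -> x != y -> jdist Om j x y e ->
     d <= e).

Definition nbr_set (Om : {set T}) (j : nat) (Delta : {set {set T}})
  : {set {set T}} :=
  [set y : {set T} | [&& y \subset Om, #|y| == j, y \notin Delta
                       & [exists x in Delta, jadj Om j x y]]].

Definition invariant_on (H : {set {perm T}}) (Delta : {set {set T}}) : Prop :=
  forall h x, h \in H -> x \in Delta -> pact h x \in Delta.

Definition transitive_on (H : {set {perm T}}) (Delta : {set {set T}}) : Prop :=
  forall x y, x \in Delta -> y \in Delta -> exists2 h, h \in H & pact h x = y.

Definition strongly_inc_trans (H : {set {perm T}}) (Om : {set T})
  (Delta : {set {set T}}) : Prop :=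
  [/\ invariant_on H Delta, transitive_on H Delta &
   forall x, x \in Delta ->
     forall p1 q1 p2 q2, p1 \in x -> q1 \in Om :\: x ->
       p2 \in x -> q2 \in Om :\: x ->
       exists2 h, h \in H & [/\ pact h x = x, h p1 = p2 & h q1 = q2]].

Definition neighbour_trans (H : {set {perm T}}) (Om : {set T}) (j : nat)
  (Delta : {set {set T}}) : Prop :=
  transitive_on H Delta /\ transitive_on H (nbr_set Om j Delta).

End Johnson.

Section Wreath.
Variable V : finType.

Definition GammaOf (Gamma0 : {set {set {set V}}}) : {set {set V}} :=
  [set \bigcup_(U in g0) U | g0 : {set {set V}} in Gamma0].

(* A = Aut(Gamma0) cap Sym(U): permutations of the set of parts P
   (permutations of {set V} supported on P) stabilising Gamma0. *)
Definition AutU (P : {set {set V}}) (Gamma0 : {set {set {set V}}})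
  : {set {perm {set V}}} :=
  [set s : {perm {set V}} | perm_on P s &&
     (pact s @: Gamma0 == Gamma0)].

(* S_a wr A : permutations of V preserving the partition P and inducing
   on the parts a permutation lying in A. *)
Definition wreath (P : {set {set V}}) (A : {set {perm {set V}}})
  : {set {perm V}} :=
  [set g : {perm V} | [exists s in A, [forall U in P, s U == pact g U]]].

End Wreath.

(* Main.v *)
Require Import Defs.
From mathcomp Require Import all_boot all_order all_fingroup.
From mathcomp Require Import zify.

Set Implicit Arguments. Unset Strict Implicit. Unset Printing Implicit Defensive.


Section Helpers.
Variable T : finType.
Implicit Types (x y z : {set T}) (p q : T).

Definition swp x p q := q |: (x :\ p).

Lemma pact_swp (h : {perm T}) x p q :
  pact h (swp x p q) = swp (pact h x) (h p) (h q).
Proof.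
rewrite /pact /swp imsetU1; congr (_ |: _).
apply/setP=> z; rewrite -[z](permKV h) !inE !mem_imset ?inE ?(inj_eq perm_inj) //;
  exact: perm_inj.
Qed.

Lemma swp_card x p q : p \in x -> q \notin x -> #|swp x p q| = #|x|.
Proof.
move=> px qx; rewrite /swp cardsU1 [in RHS](cardsD1 p x) px !inE (negbTE qx) andbF.
by rewrite addnC.
Qed.

Lemma swpI x p q : p \in x -> q \notin x -> x :&: swp x p q = x :\ p.
Proof.
move=> px qx; apply/setP=> v; rewrite !inE.
have pq : (q == p) = false by apply/eqP=> e; move: qx; rewrite e px.
by case: (v =P q) => [->|_]; try case: (v =P p) => [->|_];
  rewrite /= ?pq ?eqxx ?px ?(negbTE qx) /= ?andbT ?andbF ?orbF ?orbT //=; case: (v \in _).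
Qed.

Lemma swpD x y p q : q \in y -> swp x p q :\: y = (x :\: y) :\ p.
Proof.
move=> qy; apply/setP=> v; rewrite !inE.
case: (v =P q) => [->|_]; rewrite /= ?qy ?andbF ?orbF //=.
by case: (v \in y); case: (v == p).
Qed.

Lemma swpK x p q : p \in x -> q \notin x -> swp (swp x p q) q p = x.
Proof.
move=> px qx; apply/setP=> v; rewrite !inE.
have pq : (q == p) = false by apply/eqP=> e; move: qx; rewrite e px.
by case: (v =P q) => [->|_]; try case: (v =P p) => [->|_];
  rewrite /= ?pq ?eqxx ?px ?(negbTE qx) /= ?andbT ?andbF ?orbF ?orbT //=; case: (v \in _).
Qed.

Lemma jadj_D1 (Om : {set T}) j x y : jadj Om j x y -> #|x :\: y| <= 1.
Proof.
case/and5P=> _ _ /eqP hx _ /eqP hi; have := cardsID y x; lia.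
Qed.

Lemma triang x y z : #|x :\: z| <= #|x :\: y| + #|y :\: z|.
Proof.
have sub : x :\: z \subset (x :\: y) :|: (y :\: z).
  by apply/subsetP=> v; rewrite !inE; case: (v \in y); case: (v \in z); case: (v \in x).
apply: (leq_trans (subset_leq_card sub)); rewrite cardsU; lia.
Qed.

Lemma jwalk_lb (Om : {set T}) j x y m : jwalk Om j x y m -> #|x :\: y| <= m.
Proof.
case=> s [<- hp <-]; elim: s x hp => [|z s IH] x /=.
  by rewrite setDv cards0.
case/andP=> hxz hs; apply: (leq_trans (triang x z (last z s))).
have := jadj_D1 hxz; have := IH z hs; lia.
Qed.

Lemma jwalk_ub (Om : {set T}) j n : forall x y, x \subset Om -> y \subset Om ->
  #|x| = j -> #|y| = j -> #|x :\: y| = n -> jwalk Om j x y n.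
Proof.
elim: n => [|n IH] x y xO yO hx hy hn.
  exists [::]; split=> //=; apply/eqP; rewrite eqEcard hx hy leqnn andbT.
  by rewrite -setD_eq0 -cards_eq0 hn.
have : 0 < #|x :\: y| by rewrite hn.
case/card_gt0P=> p; rewrite inE => /andP [py px].
have hyx : #|y :\: x| = n.+1.
  have := cardsID y x; have := cardsID x y; rewrite setIC; lia.
have : 0 < #|y :\: x| by rewrite hyx.
case/card_gt0P=> q; rewrite inE => /andP [qx qy].
have zO : swp x p q \subset Om.
  rewrite /swp subUset sub1set (subsetP yO) //=.
  by apply: subset_trans xO; apply: subD1set.
have hz : #|swp x p q| = j by rewrite swp_card.
have hn' : #|swp x p q :\: y| = n.
  by rewrite swpD //; move: hn; rewrite (cardsD1 p (x :\: y)) inE px py /=; lia.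
have [s [hs hp hl]] := IH (swp x p q) y zO yO hz hy hn'.
exists (swp x p q :: s); split=> //=; first by rewrite hs.
rewrite hp andbT; apply/and5P; split=> //; rewrite ?hx ?hz //.
by rewrite swpI // (cardsD1 p x) px in hx *; apply/eqP; lia.
Qed.

Lemma jdistP (Om : {set T}) j x y d : x \subset Om -> y \subset Om -> #|x| = j -> #|y| = j ->
  jdist Om j x y d <-> d = #|x :\: y|.
Proof.
move=> xO yO hx hy; split.
  case=> hw hmin; apply/eqP; rewrite eqn_leq (jwalk_lb hw) andbT.
  by apply: hmin; apply: jwalk_ub.
move=> ->; split; first by apply: jwalk_ub.
by move=> m; apply: jwalk_lb.
Qed.

Lemma cardD_eq x y : #|x| = #|y| -> #|x :\: y| = #|y :\: x|.
Proof. have := cardsID y x; have := cardsID x y; rewrite setIC; lia. Qed.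

Lemma cardD0 x y : #|x| = #|y| -> x != y -> 0 < #|x :\: y|.
Proof.
move=> hxy nxy; rewrite card_gt0 setD_eq0; apply: contra nxy => sxy.
by rewrite eqEcard sxy hxy leqnn.
Qed.

End Helpers.


Section Part.
Variables (V : finType) (P : {set {set V}}) (a : nat).
Hypothesis hP : partition P [set: V].
Hypothesis hsz : forall U, U \in P -> #|U| = a.
Hypothesis ha : 1 < a.

Local Notation pb := (pblock P).

Lemma covP : cover P = [set: V].
Proof. exact: cover_partition hP. Qed.

Lemma trivP : trivIset P.
Proof. by case/and3P: hP. Qed.

Lemma P0 : set0 \notin P.
Proof. by case/and3P: hP. Qed.

Lemma pb_in v : pb v \in P.
Proof. by apply: pblock_mem; rewrite covP inE. Qed.

Lemma mem_pb v : v \in pb v.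
Proof. by rewrite mem_pblock covP inE. Qed.

Lemma pbE U v : U \in P -> v \in U -> pb v = U.
Proof. by move=> UP vU; apply: def_pblock trivP UP vU. Qed.

Lemma part_n0 U : U \in P -> exists v, v \in U.
Proof. by move=> UP; apply/card_gt0P; rewrite hsz //; lia. Qed.

Lemma part_other U v : U \in P -> v \in U -> exists2 w, w \in U & w != v.
Proof.
move=> UP vU; have := cardsD1 v U; rewrite vU hsz // => h.
have : 0 < #|U :\ v| by lia.
by case/card_gt0P=> w; rewrite !inE => /andP [wv wU]; exists w.
Qed.

Lemma memcov (g : {set {set V}}) v : g \subset P -> (v \in cover g) = (pb v \in g).
Proof.
move=> gP; apply/bigcupP/idP => [[U Ug vU]|h].
  by rewrite (pbE (subsetP gP U Ug) vU).
by exists (pb v) => //; apply: mem_pb.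
Qed.

Lemma cov_inj (g h : {set {set V}}) : g \subset P -> h \subset P -> cover g = cover h -> g = h.
Proof.
move=> gP hP' e; apply/setP=> U.
wlog suff: g h gP hP' e / U \in g -> U \in h.
  by move=> W; apply/idP/idP; apply: W.
move=> Ug; have [v vU] := part_n0 (subsetP gP U Ug).
have := memcov v gP; rewrite e memcov // (pbE (subsetP gP U Ug) vU) Ug.
by move=> ->.
Qed.

Lemma card_cov (g : {set {set V}}) : g \subset P -> #|cover g| = #|g| * a.
Proof.
move=> gP; apply: card_uniform_partition.
  by move=> U Ug; apply: hsz; apply: (subsetP gP).
apply/and3P; split=> //; first by apply: trivIsetS gP trivP.
by apply: contra P0; apply: (subsetP gP).
Qed.

Lemma covI (g h : {set {set V}}) : g \subset P -> h \subset P -> cover g :&: cover h = cover (g :&: h).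
Proof.
move=> gP hP'; apply/setP=> v.
rewrite inE !memcov // ?inE //; apply: subset_trans gP; apply: subsetIl.
Qed.

Lemma covD (g h : {set {set V}}) : g \subset P -> h \subset P -> cover g :\: cover h = cover (g :\: h).
Proof.
move=> gP hP'; apply/setP=> v.
rewrite inE !memcov // ?inE 1?andbC //; apply: subset_trans gP; apply: subsetDl.
Qed.

Lemma pactM (g h : {perm V}) (U : {set V}) : pact (g * h) U = pact h (pact g U).
Proof. by rewrite /pact -imset_comp; apply: eq_imset => z; rewrite permM. Qed.

Definition idx v := index v (enum (pb v)).
Definition liftf (s : {perm {set V}}) v := nth v (enum (s (pb v))) (idx v).

Lemma idx_lt v : idx v < a.
Proof. by rewrite /idx -(hsz (pb_in v)) cardE index_mem mem_enum mem_pb. Qed.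

Lemma liftf_in s : perm_on P s -> forall v, liftf s v \in s (pb v).
Proof.
move=> hs v; rewrite /liftf -mem_enum; apply: mem_nth.
by rewrite -cardE hsz ?idx_lt // perm_closed // pb_in.
Qed.

Lemma liftf_inj s : perm_on P s -> injective (liftf s).
Proof.
move=> hs v w e; have hv := liftf_in hs v; have hw := liftf_in hs w.
have sP u : s (pb u) \in P by rewrite perm_closed // pb_in.
have e1 : s (pb v) = s (pb w).
  by rewrite -(pbE (sP v) hv) -(pbE (sP w) hw) e.
have e2 : pb v = pb w := perm_inj e1.
have iv : idx v < size (enum (s (pb w))) by rewrite -cardE hsz ?idx_lt.
have iw : idx w < size (enum (s (pb w))) by rewrite -cardE hsz ?idx_lt.
move: e; rewrite /liftf e2 (set_nth_default w v iv) => /eqP.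
rewrite nth_uniq ?enum_uniq // /idx e2 => /eqP e3.
have vin : v \in enum (pb w) by rewrite mem_enum -e2 mem_pb.
have win : w \in enum (pb w) by rewrite mem_enum mem_pb.
by rewrite -(nth_index v vin) e3 (nth_index v win).
Qed.

Lemma lift_ex s : perm_on P s ->
  exists g : {perm V}, forall U, U \in P -> pact g U = s U.
Proof.
move=> hs; exists (perm (liftf_inj hs)) => U UP.
apply/eqP; rewrite eqEcard card_imset ?hsz ?perm_closed // ?leqnn ?andbT;
  last exact: perm_inj.
apply/subsetP=> z /imsetP [v vU ->]; rewrite permE.
by rewrite -(pbE UP vU); apply: liftf_in.
Qed.

Lemma tperm_part x y U : pb x = pb y -> U \in P -> pact (tperm x y) U = U.
Proof.
move=> exy UP; apply/eqP; rewrite eqEcard card_imset ?leqnn ?andbT;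
  last exact: perm_inj.
apply/subsetP=> z /imsetP [v vU ->].
case: tpermP => [e|e|] //; subst v.
  by rewrite -(pbE UP vU) exy mem_pb.
by rewrite -(pbE UP vU) -exy mem_pb.
Qed.

Lemma lift2 s p1 q1 p2 q2 : perm_on P s -> s (pb p1) = pb p2 ->
  s (pb q1) = pb q2 -> pb p2 != pb q2 ->
  exists g : {perm V}, [/\ forall U, U \in P -> pact g U = s U, g p1 = p2 & g q1 = q2].
Proof.
move=> hs ep eq npq; have [g hg] := lift_ex hs.
have gp : pb (g p1) = pb p2.
  apply: pbE; first exact: pb_in.
  by rewrite -ep -hg ?pb_in //; apply: imset_f; apply: mem_pb.
pose g1 := (g * tperm p2 (g p1))%g.
have hg1 U : U \in P -> pact g1 U = s U.
  move=> UP; rewrite pactM hg // tperm_part //; last by rewrite perm_closed.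
have g1p : g1 p1 = p2 by rewrite permM tpermR.
have gq : pb (g1 q1) = pb q2.
  apply: pbE; first exact: pb_in.
  by rewrite -eq -hg1 ?pb_in //; apply: imset_f; apply: mem_pb.
exists (g1 * tperm q2 (g1 q1))%g; split.
- by move=> U UP; rewrite pactM hg1 // tperm_part // ?perm_closed // gq.
- rewrite permM g1p tpermD //.
    by apply: contra npq => /eqP ->.
  by apply: contra npq => /eqP <-; rewrite gq.
- by rewrite permM tpermR.
Qed.

End Part.


Section Closure.
Variable T : finType.
Implicit Types (x y z : {set T}) (p q : T).

Lemma adj_swp (Om : {set T}) k x y : jadj Om k x y -> x != y ->
  exists p, exists q, [/\ p \in x, q \notin x, q \in y & y = swp x p q].
Proof.
move=> hj nxy; have := hj; case/and5P=> xO yO /eqP hx /eqP hy /eqP hi.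
have h1 := jadj_D1 hj.
have h0 := cardD0 (etrans hx (esym hy)) nxy.
have hxy1 : #|x :\: y| = 1 by lia.
have hyx1 : #|y :\: x| = 1 by rewrite -cardD_eq ?hx ?hy.
have [p] : exists p, p \in x :\: y by apply/card_gt0P; rewrite hxy1.
have [q] : exists q, q \in y :\: x by apply/card_gt0P; rewrite hyx1.
rewrite !inE => /andP [qx qy] /andP [py px].
exists p, q; split=> //.
have e1 : x :\: y = [set p].
  apply/eqP; rewrite eq_sym eqEcard cards1 hxy1 leqnn andbT sub1set !inE py px.
  by [].
apply/eqP; rewrite eq_sym eqEcard swp_card // hx hy leqnn andbT.
rewrite /swp subUset sub1set qy /=; apply/subsetP=> v; rewrite !inE => /andP [vp vx].
case vy: (v \in y) => //; have : v \in x :\: y by rewrite !inE vy vx.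
by rewrite e1 inE (negbTE vp).
Qed.

Lemma inc_closure (H : {set {perm T}}) (Om : {set T}) (D : {set {set T}}) k x y :
  strongly_inc_trans H Om D -> (forall h, h \in H -> perm_on Om h) ->
  (forall z : {set T}, z \in D -> z \subset Om /\ #|z| = k) ->
  x \in D -> y \in D -> x != y -> jadj Om k x y ->
  D = [set z : {set T} | (z \subset Om) && (#|z| == k)].
Proof.
case=> hinv htr hst hperm hD xD yD nxy hj.
have [p0 [q0 [p0x q0x q0y ey]]] := adj_swp hj nxy.
have [xO hx] := hD x xD; have [yO hy] := hD y yD.
have step (z : {set T}) (p q : T) : z \in D -> p \in z -> q \in Om :\: z -> swp z p q \in D.
  move=> zD pz qz.
  have [h hH hxz] := htr x z xD zD.
  have hyD : pact h y \in D by apply: hinv.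
  rewrite ey pact_swp hxz in hyD.
  have hp0 : h p0 \in z by rewrite -hxz; apply: imset_f.
  have hq0 : h q0 \in Om :\: z.
    rewrite !inE (perm_closed _ (hperm h hH)) (subsetP yO _ q0y) andbT.
    rewrite -hxz /pact (mem_imset _ _ (@perm_inj _ h)).
    exact: q0x.
  have [h' h'H [h'z e1 e2]] := hst z zD (h p0) (h q0) p q hp0 hq0 pz qz.
  have hh := hinv h' _ h'H hyD.
  by rewrite pact_swp h'z e1 e2 in hh.
have ind n : forall z : {set T}, z \subset Om -> #|z| = k -> #|z :\: x| = n -> z \in D.
  elim: n => [|n IH] z zO hz hn.
    suff -> : z = x by [].
    apply/eqP; rewrite eqEcard hz hx leqnn andbT.
    by rewrite -setD_eq0 -cards_eq0 hn.
  have : 0 < #|z :\: x| by rewrite hn.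
  case/card_gt0P=> q; rewrite inE => /andP [qx qz].
  have hxz : #|x :\: z| = n.+1 by rewrite cardD_eq ?hx ?hz.
  have : 0 < #|x :\: z| by rewrite hxz.
  case/card_gt0P=> p; rewrite inE => /andP [pz px].
  have z'O : swp z q p \subset Om.
    rewrite /swp subUset sub1set (subsetP xO) //=.
    by apply: subset_trans zO; apply: subD1set.
  have hz' : #|swp z q p| = k by rewrite swp_card.
  have hn' : #|swp z q p :\: x| = n.
    by rewrite swpD //; move: hn; rewrite (cardsD1 q (z :\: x)) inE qx qz /= add1n => -[].
  have z'D := IH _ z'O hz' hn'.
  rewrite -(swpK qz pz); apply: step => //.
    by rewrite /swp !inE eqxx.
  rewrite !inE (subsetP zO) // andbT negb_or eqxx /= andbT.
  by apply/eqP=> e; move: pz; rewrite -e qz.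
apply/setP=> z; rewrite inE; apply/idP/idP.
  by move=> zD; have [zO hz] := hD z zD; rewrite zO hz eqxx.
by case/andP=> zO /eqP hz; apply: (ind _ z zO hz erefl).
Qed.

Lemma jadj_pact (h : {perm T}) j x y : jadj [set: T] j x y ->
  jadj [set: T] j (pact h x) (pact h y).
Proof.
case/and5P=> _ _ hx hy hi; apply/and5P; split; rewrite ?subsetT //.
- by rewrite /pact card_imset //; exact: perm_inj.
- by rewrite /pact card_imset //; exact: perm_inj.
rewrite /pact -imsetI ?card_imset //; first exact: perm_inj.
by move=> u v _ _; apply: perm_inj.
Qed.

End Closure.


Section Main.
Variables (V : finType) (P : {set {set V}}) (Gamma0 : {set {set {set V}}}).

Lemma inG X : reflect (exists2 g0, g0 \in Gamma0 & X = cover g0) (X \in GammaOf Gamma0).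
Proof. exact: imsetP. Qed.

Lemma inW g : g \in wreath P (AutU P Gamma0) ->
  exists2 s, s \in AutU P Gamma0 & forall U, U \in P -> s U = pact g U.
Proof.
rewrite inE => /exists_inP [s sA /forall_inP h]; exists s => // U UP.
exact/eqP/h.
Qed.

Lemma Win g s : s \in AutU P Gamma0 -> (forall U, U \in P -> s U = pact g U) ->
  g \in wreath P (AutU P Gamma0).
Proof.
move=> sA h; rewrite inE; apply/exists_inP; exists s => //.
by apply/forall_inP => U UP; rewrite h.
Qed.

Lemma inA s : s \in AutU P Gamma0 -> perm_on P s /\ pact s @: Gamma0 = Gamma0.
Proof. by rewrite inE => /andP [? /eqP]. Qed.

Lemma sG s g0 : s \in AutU P Gamma0 -> g0 \in Gamma0 -> pact s g0 \in Gamma0.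
Proof. by move=> /inA [_ e] g; rewrite -e; apply: imset_f. Qed.

Lemma pactS (s : {perm {set V}}) (g0 : {set {set V}}) :
  perm_on P s -> g0 \subset P -> pact s g0 \subset P.
Proof.
move=> hs gP; apply/subsetP=> z /imsetP [U Ug ->]; rewrite perm_closed //.
exact: (subsetP gP).
Qed.

Lemma pact_cover (g : {perm V}) (s : {perm {set V}}) (g0 : {set {set V}}) :
  (forall U, U \in P -> s U = pact g U) -> g0 \subset P ->
  pact g (cover g0) = cover (pact s g0).
Proof.
move=> hs gP; rewrite /pact imset_cover cover_imset; apply: eq_bigr => U Ug.
by rewrite hs //; apply: (subsetP gP).
Qed.

End Main.

Lemma count_adj (V : finType) (P : {set {set V}}) a k0 (g0 g1 : {set {set V}}) u w :
  partition P [set: V] -> (forall U, U \in P -> #|U| = a) -> 1 < a ->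
  g0 \subset P -> g1 \subset P -> #|g0| = k0 -> #|g1| = k0 -> 0 < k0 ->
  w \notin cover g0 -> g1 != g0 ->
  jadj [set: V] (a * k0) (cover g1) (swp (cover g0) u w) ->
  a = 2 /\ #|g0 :&: g1| = k0.-1.
Proof.
move=> hP hsz ha g0P g1P h0 h1 k0p wX n10 /and5P [_ _ _ _ /eqP hi].
have sub : cover g1 :&: swp (cover g0) u w \subset w |: (cover g1 :&: cover g0).
  apply/subsetP=> v; rewrite !inE => /andP [-> /orP [->|/andP [_ ->]]] //.
  by rewrite orbT.
have c1 := subset_leq_card sub.
rewrite cardsU1 hi (covI hP g1P g0P) (card_cov hP hsz) ?(subset_trans (subsetIl _ _) g1P) // in c1.
have c0 := cardD0 (etrans h1 (esym h0)) n10.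
have c2 := cardsID g0 g1; rewrite h1 in c2.
rewrite setIC.
move: (#|g1 :&: g0|) c1 c2 => c c1 c2.
move: (#|g1 :\: g0|) c0 c2 => d c0 c2.
move: (w \notin _) c1 => b c1.
have hb : (b : nat) <= 1 by case: b c1.
clear -c1 c2 c0 hb ha k0p.
nia.
Qed.

Unset Implicit Arguments. Set Strict Implicit. Set Printing Implicit Defensive.


Theorem lemma4p6 (V : finType) (P : {set {set V}}) (a b k0 : nat)
  (Gamma0 : {set {set {set V}}}) :
  partition P [set: V] ->
  #|P| = b ->
  (forall U, U \in P -> #|U| = a) ->
  1 < a -> 4 <= b ->
  1 <= k0 <= b - 1 ->
  (forall g0, g0 \in Gamma0 -> g0 \subset P /\ #|g0| = k0) ->
  [/\ (* Aut(Gamma) contains S_a wr A *)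
      (forall g x, g \in wreath P (AutU P Gamma0) -> x \in GammaOf Gamma0 ->
         pact g x \in GammaOf Gamma0),
      (* delta(Gamma) = a * delta(Gamma0) *)
      (forall d0, min_dist P k0 Gamma0 d0 ->
         min_dist [set: V] (a * k0) (GammaOf Gamma0) (a * d0)),
      (* (a) *)
      (strongly_inc_trans (AutU P Gamma0) P Gamma0 ->
         strongly_inc_trans (wreath P (AutU P Gamma0)) [set: V] (GammaOf Gamma0)
         /\ (Gamma0 = [set g0 : {set {set V}} | (g0 \subset P) && (#|g0| == k0)]
             \/ forall d, min_dist P k0 Gamma0 d -> 2 <= d)) &
      (* (b) *)
      (neighbour_trans (wreath P (AutU P Gamma0)) [set: V] (a * k0)
         (GammaOf Gamma0) ->
         strongly_inc_trans (AutU P Gamma0) P Gamma0 \/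
         (a = 2 /\ min_dist P k0 Gamma0 1))].
Proof.
move=> hP hb hsz ha hb4 hk0 hG0.
have k0p : 0 < k0 by case/andP: hk0.
have hGs g0 : g0 \in Gamma0 -> g0 \subset P by move=> h; case: (hG0 g0 h).
have hGc g0 : g0 \in Gamma0 -> #|g0| = k0 by move=> h; case: (hG0 g0 h).
have cardX g0 : g0 \in Gamma0 -> #|cover g0| = a * k0.
  by move=> h; rewrite (card_cov hP hsz (hGs _ h)) hGc // mulnC.
have inv : forall g x, g \in wreath P (AutU P Gamma0) -> x \in GammaOf Gamma0 ->
    pact g x \in GammaOf Gamma0.
  move=> g x /inW [s sA hs] /inG [g0 g0G ->]; apply/inG; exists (pact s g0).
    exact: sG sA g0G.
  exact: pact_cover (hGs _ g0G).
have distG g0 g1 e : g0 \in Gamma0 -> g1 \in Gamma0 ->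
    jdist [set: V] (a * k0) (cover g0) (cover g1) e <-> e = a * #|g0 :\: g1|.
  move=> h0 h1; rewrite jdistP ?subsetT ?cardX //.
  rewrite (covD hP (hGs _ h0) (hGs _ h1)).
  by rewrite (card_cov hP hsz (subset_trans (subsetDl _ _) (hGs _ h0))) mulnC.
have distP0 g0 g1 e : g0 \in Gamma0 -> g1 \in Gamma0 ->
    jdist P k0 g0 g1 e <-> e = #|g0 :\: g1|.
  by move=> h0 h1; apply: jdistP; [apply: hGs|apply: hGs|apply: hGc|apply: hGc].
have covinj g0 g1 : g0 \in Gamma0 -> g1 \in Gamma0 -> cover g0 = cover g1 -> g0 = g1.
  by move=> h0 h1; apply: (cov_inj hP hsz ha (hGs _ h0) (hGs _ h1)).
have adjE x y : x \in Gamma0 -> y \in Gamma0 -> #|x :\: y| = 1 -> jadj P k0 x y.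
  move=> xG yG e1; apply/and5P; split;
    [exact: hGs|exact: hGs|by rewrite (hGc x xG)|by rewrite (hGc y yG)|].
  by move: (cardsID y x); rewrite (hGc x xG) e1 addn1 => <-.
split.
- exact: inv.
- move=> d0 [[x [y [xG yG nxy hd]]] hmin].
  move/(distP0 _ _ _ xG yG): hd => hd.
  split.
    exists (cover x), (cover y); split.
    + by apply/inG; exists x.
    + by apply/inG; exists y.
    + by apply: contra nxy => /eqP e; apply/eqP; apply: covinj.
    + by apply/distG => //; rewrite hd.
  move=> X Y e /inG [x' x'G ->] /inG [y' y'G ->] nXY /(distG _ _ _ x'G y'G) ->.
  rewrite leq_mul2l; apply/orP; right; apply: (hmin x' y') => //.
    by apply: contra nXY => /eqP ->.
  exact/distP0.
- move=> sit; have [hinvA htrA hstA] := sit.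
  split.
    split; first exact: inv.
    + move=> X Y /inG [g0 g0G ->] /inG [g1 g1G ->].
      have [s sA e] := htrA g0 g1 g0G g1G.
      have [hs _] := inA sA.
      have [g hg] := lift_ex hP hsz hs.
      have hgs : forall U, U \in P -> s U = pact g U by move=> U UP; rewrite hg.
      exists g; first exact: Win sA hgs.
      by rewrite (pact_cover hgs (hGs _ g0G)) e.
    + move=> X /inG [g0 g0G ->] p1 q1 p2 q2 p1X q1X p2X q2X.
      have gP := hGs _ g0G.
      rewrite (memcov hP _ gP) in p1X; rewrite (memcov hP _ gP) in p2X.
      rewrite inE (memcov hP _ gP) in q1X; case/andP: q1X => q1X _.
      rewrite inE (memcov hP _ gP) in q2X; case/andP: q2X => q2X _.
      have hq1 : pblock P q1 \in P :\: g0 by rewrite inE (pb_in hP) q1X.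
      have hq2 : pblock P q2 \in P :\: g0 by rewrite inE (pb_in hP) q2X.
      have [s sA [sg0 e1 e2]] := hstA g0 g0G _ _ _ _ p1X hq1 p2X hq2.
      have [hs _] := inA sA.
      have npq : pblock P p2 != pblock P q2.
        by apply/eqP => e; move: q2X; rewrite -e p2X.
      have [g [hg gp gq]] := lift2 hP hsz hs e1 e2 npq.
      have hgs : forall U, U \in P -> s U = pact g U by move=> U UP; rewrite hg.
      exists g; first exact: Win sA hgs.
      by split=> //; rewrite (pact_cover hgs gP) sg0.
  case: (boolP [exists x in Gamma0, exists y in Gamma0, (x != y) && jadj P k0 x y]) => hc.
    left; case/exists_inP: hc => x xG /exists_inP [y yG /andP [nxy hj]].
    apply: (inc_closure sit _ _ xG yG nxy hj).
      by move=> h /inA [].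
    exact: hG0.
  right => d [[x [y [xG yG nxy hd]]] _].
  move/(distP0 _ _ _ xG yG): hd => ->.
  have h0 := cardD0 (etrans (hGc _ xG) (esym (hGc _ yG))) nxy.
  have : #|x :\: y| != 1.
    apply: contraNneq hc => e1; apply/exists_inP; exists x => //.
    by apply/exists_inP; exists y => //; rewrite nxy /= adjE.
  move: (#|x :\: y|) h0 => n; clear; lia.
- case=> trG trN.
  case: (boolP ([exists x in Gamma0, exists y in Gamma0, (x != y) && jadj P k0 x y]
                 && (a == 2))) => hc.
    right; case/andP: hc => hc /eqP a2; split=> //.
    case/exists_inP: hc => x xG /exists_inP [y yG /andP [nxy hj]].
    split.
      exists x, y; split=> //; apply/distP0 => //.
      have := jadj_D1 hj; have := cardD0 (etrans (hGc _ xG) (esym (hGc _ yG))) nxy.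
      move: (#|x :\: y|) => n; clear; lia.
    move=> x' y' e x'G y'G nxy' /(distP0 _ _ _ x'G y'G) ->.
    exact: cardD0 (etrans (hGc _ x'G) (esym (hGc _ y'G))) nxy'.
  left; split.
  + by move=> h x hA xG; apply: sG hA xG.
  + move=> x y xG yG.
    have xG' : cover x \in GammaOf Gamma0 by apply/inG; exists x.
    have yG' : cover y \in GammaOf Gamma0 by apply/inG; exists y.
    have [g gW e] := trG _ _ xG' yG'.
    have [s sA hs] := inW gW.
    have [hsp _] := inA sA.
    exists s => //; apply: (cov_inj hP hsz ha (pactS hsp (hGs _ xG)) (hGs _ yG)).
    by rewrite -(pact_cover hs (hGs _ xG)).
  + move=> g0 g0G U1 W1 U2 W2 U1g W1g U2g W2g.
    have gP := hGs _ g0G.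
    have U1P := subsetP gP _ U1g; have U2P := subsetP gP _ U2g.
    rewrite inE in W1g; case/andP: W1g => W1n W1P.
    rewrite inE in W2g; case/andP: W2g => W2n W2P.
    have [u1 u1U] := part_n0 hP hsz ha U1P.
    have [u2 u2U] := part_n0 hP hsz ha U2P.
    have [w1 w1W] := part_n0 hP hsz ha W1P.
    have [w2 w2W] := part_n0 hP hsz ha W2P.
    have cX : #|cover g0| = a * k0 := cardX _ g0G.
    have XG : cover g0 \in GammaOf Gamma0 by apply/inG; exists g0.
    have memX v : (v \in cover g0) = (pblock P v \in g0) := memcov hP v gP.
    have inX u U : U \in g0 -> u \in U -> u \in cover g0.
      by move=> Ug uU; rewrite memX (pbE hP (subsetP gP _ Ug) uU).
    have ninX w W : W \in P -> W \notin g0 -> w \in W -> w \notin cover g0.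
      by move=> WP Wn wW; rewrite memX (pbE hP WP wW).
    have jXY u w U W : U \in g0 -> W \in P -> W \notin g0 -> u \in U -> w \in W ->
        jadj [set: V] (a * k0) (cover g0) (swp (cover g0) u w).
      move=> Ug WP Wn uU wW.
      have uX := inX u U Ug uU; have wX := ninX w W WP Wn wW.
      apply/and5P; split; rewrite ?subsetT //.
      - by rewrite cX.
      - by rewrite swp_card // cX.
      rewrite swpI //; move: (cardsD1 u (cover g0)); rewrite uX cX add1n => ->.
      by [].
    have nbr u w U W : U \in g0 -> W \in P -> W \notin g0 -> u \in U -> w \in W ->
        swp (cover g0) u w \in nbr_set [set: V] (a * k0) (GammaOf Gamma0).
      move=> Ug WP Wn uU wW.
      have uX := inX u U Ug uU; have wX := ninX w W WP Wn wW.
      have hj := jXY u w U W Ug WP Wn uU wW.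
      rewrite inE; apply/and4P; split.
      - exact: subsetT.
      - by rewrite swp_card // cX.
      - apply/inG => -[g1 g1G e].
        have wY : w \in swp (cover g0) u w by rewrite /swp setU11.
        have [w' w'W nw'] := part_other hP hsz ha WP wW.
        have : w' \in cover g1.
          rewrite (memcov hP _ (hGs _ g1G)) (pbE hP WP w'W) -(pbE hP WP wW).
          by rewrite -(memcov hP _ (hGs _ g1G)) -e.
        rewrite -e /swp !inE (negbTE nw') /= => /andP [_ w'X].
        by move: (ninX w' W WP Wn w'W); rewrite w'X.
      - by apply/exists_inP; exists (cover g0).
    have [h hW hY] := trN _ _ (nbr u1 w1 U1 W1 U1g W1P W1n u1U w1W)
                              (nbr u2 w2 U2 W2 U2g W2P W2n u2U w2W).
    have [s sA hs] := inW hW.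
    have [hsp _] := inA sA.
    have := inv h _ hW XG; case/inG => g1 g1G eX.
    have hj : jadj [set: V] (a * k0) (cover g1) (swp (cover g0) u2 w2).
      by rewrite -eX -hY; apply: jadj_pact; apply: (jXY _ _ _ _ U1g W1P W1n u1U w1W).
    have g10 : g1 = g0.
      apply/eqP; apply/negPn/negP => n10.
      have [a2 hi] := count_adj hP hsz ha gP (hGs _ g1G) (hGc _ g0G) (hGc _ g1G) k0p
                        (ninX _ _ W2P W2n w2W) n10 hj.
      move/negP: hc; apply; rewrite a2 eqxx andbT.
      apply/exists_inP; exists g0 => //; apply/exists_inP; exists g1 => //.
      rewrite eq_sym n10 /=; apply/and5P; split;
        [exact: gP|exact: hGs|by rewrite (hGc _ g0G)|by rewrite (hGc _ g1G)|by rewrite hi].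
    rewrite g10 in eX.
    have hinj := @perm_inj _ h.
    have u1X := inX u1 U1 U1g u1U.
    have w1X := ninX w1 W1 W1P W1n w1W.
    have hu : h u1 = u2.
      have a1 : h u1 \in pact h (cover g0) := imset_f _ u1X.
      rewrite eX in a1.
      have a2 : h u1 \notin swp (cover g0) u2 w2.
        rewrite -hY /pact (mem_imset _ _ hinj) /swp !inE eqxx /= orbF.
        by apply/eqP => e; move: w1X; rewrite -e u1X.
      by move: a2; rewrite /swp !inE a1 andbT negb_or negbK => /andP [_ /eqP].
    have hw : h w1 = w2.
      have b1 : h w1 \in swp (cover g0) u2 w2.
        by rewrite -hY; apply: imset_f; rewrite /swp setU11.
      have b2 : h w1 \notin pact h (cover g0) by rewrite /pact (mem_imset _ _ hinj).
      rewrite eX in b2.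
      by move: b1; rewrite /swp !inE (negbTE b2) andbF orbF => /eqP.
    exists s => //; split.
    * apply: (cov_inj hP hsz ha (pactS hsp gP) gP).
      by rewrite -(pact_cover hs gP).
    * have sP : s U1 \in P by rewrite perm_closed.
      have : u2 \in s U1 by rewrite hs // -hu; apply: imset_f.
      move/(pbE hP sP) <-.
exact: (pbE hP U2P u2U).
    * have sP : s W1 \in P by rewrite perm_closed.
      have : w2 \in s W1 by rewrite hs // -hw; apply: imset_f.
      move/(pbE hP sP) <-; exact: (pbE hP W2P w2W).
Qed.
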